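(* Let $\Phi=\forall u_1\ldots\forall u_n\exists e_1(D_1)\ldots\exists e_m(D_m).\varphi$ be a DQBF with prefix $\mathcal{Q}$, let $A$ be a set of arbiter variables with arbiter clauses $\varphi_A$, and let $C_1,\ldots,C_k$ be clauses such that for each $i$, $C_i$ is a forcing clause in $\varphi\wedge\varphi_A\wedge\bigwedge_{1\le j<i}C_j$. Then the DQBF $\mathcal{Q}\exists A(\emptyset).\varphi\wedge\varphi_A\wedge\bigwedge_{1\le i\le k}C_i$ is true if and only if $\Phi$ is true.
   Context: For a set $V$ of variables, $[V]$ is the set of assignments $V\to\{\textsc{true},\textsc{false}\}$; assignments are identified with terms of the literals they make true, $\neg\sigma$ is the clause of the negations of these literals, and $\sigma|_W$ denotes restriction to (the part of the domain lying in) $W$. A DQBF is $\forall u_1\ldots\forall u_n\exists e_1(D_1)\ldots\exists e_m(D_m).\varphi$ with pairwise distinct variables, $U=\{u_i\}$, $E=\{e_j\}$, dependency sets $D(e_j)=D_j\subseteq U$, and $\varphi$ a CNF over $U\cup E$; a model is a family $F=(F_e)_{e}$ with $F_e:[D(e)]\to\{\textsc{true},\textsc{false}\}$ such that for every $\sigma\in[U]$, $\sigma\cup F(\sigma)$ satisfies the matrix, where $F(\sigma)$ assigns each existential $e$ the value $F_e(\sigma|_{D(e)})$; the DQBF is true iff it has a model. Arbiter variables: for $e\in E$, $\sigma\in[D(e)]$, $e^\sigma$ is a fresh variable; for a set $A$ of them, $\varphi_A=\bigwedge_{e^\sigma\in A}\big((e^\sigma\vee\neg\sigma\vee\neg e)\wedge(\neg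 e^\sigma\vee\neg\sigma\vee e)\big)$. For a CNF $\psi$, $\mathcal{Q}\exists A(\emptyset).\psi$ is the DQBF whose prefix is that of $\Phi$ extended by every variable of $A$ as an existential variable with empty dependency set, and whose matrix is $\psi$. Forcing: let $\ell$ be a literal on a variable in $E$, $\psi$ a formula with $\mathit{var}(\psi)\subseteq U\cup E\cup A$, and $\sigma$ a partial assignment to $U\cup A$; $\ell$ is forced by $\sigma$ in $\psi$ if $\psi\wedge\sigma\wedge\neg\ell$ is unsatisfiable, and in that case $\neg(\sigma|_{D(\mathit{var}(\ell))\cup A})\vee\ell$ is called a forcing clause in $\psi$. *)

(* Defs.v *)
From mathcomp Require Import all_boot.
Set Implicit Arguments. Unset Strict Implicit. Unset Printing Implicit Defensive.

(* A literal is a pair (variable, polarity): (x, true) is x, (x, false) is ~x. *)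
Definition lit (T : Type) := (T * bool)%type.
Definition clause (T : Type) := seq (lit T).
Definition cnf (T : Type) := seq (clause T).

Definition sat_lit (T : Type) (t : T -> bool) (l : lit T) : bool := t l.1 == l.2.
Definition sat_clause (T : Type) (t : T -> bool) (C : clause T) : bool :=
  has (sat_lit t) C.
Definition sat (T : Type) (t : T -> bool) (phi : cnf T) : bool :=
  all (sat_clause t) phi.

(* Partial assignments: {ffun T -> option bool}; domain = where it is Some. *)
Definition pdom (T : finType) (s : {ffun T -> option bool}) : {set T} :=
  [set x | s x != None].

Definition restrict (T : finType) (s : {ffun T -> option bool}) (W : {set T})
  : {ffun T -> option bool} :=
  [ffun x => if x \in W then s x else None].

Definition negclause (T : finType) (s : {ffun T -> option bool}) : clause T :=
  pmap (fun x => omap (fun b => (x, ~~ b)) (s x)) (enum T).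

(* A model assigns to every existential e a Skolem function
   F e : [D e] -> bool, encoded as a function of total assignments that only
   depends on the values on D e.  Given sigma in [U] (a total assignment of
   which only the U-part is used), sigma \cup F(sigma) is the assignment
   below (variables outside U \cup E, which do not occur, get false). *)
Definition dqbf_true (T : finType) (U E : {set T}) (D : T -> {set T})
  (phi : cnf T) : Prop :=
  exists F : T -> {ffun T -> bool} -> bool,
    (forall e, e \in E -> forall s s' : {ffun T -> bool},
        {in D e, s =1 s'} -> F e s = F e s') /\
    (forall s : {ffun T -> bool},
        sat (fun x => if x \in E then F x s else if x \in U then s x else false)
            phi).

(* An arbiter variable e^sigma is indexed by e and sigma in [D(e)], the latter
   encoded as a partial assignment on V with domain exactly D(e).  Arbiter
   variables live in the right summand of the extended variable type, which
   makes them fresh. *)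
Definition arb (V : finType) := (V * {ffun V -> option bool})%type.
Definition xvar (V : finType) := (V + arb V)%type.

Definition lift_lit (V : finType) (l : lit V) : lit (xvar V) := (inl l.1, l.2).
Definition lift_cnf (V : finType) (phi : cnf V) : cnf (xvar V) :=
  map (map (@lift_lit V)) phi.

Definition valid_arbiters (V : finType) (E : {set V}) (D : V -> {set V})
  (A : {set arb V}) : Prop :=
  forall a, a \in A -> a.1 \in E /\ pdom a.2 = D a.1.

(* (e^s \/ ~s \/ ~e) /\ (~e^s \/ ~s \/ e) *)
Definition arbiter_clauses_of (V : finType) (a : arb V) : cnf (xvar V) :=
  [:: (inr a, true) :: map (@lift_lit V) (negclause a.2) ++ [:: (inl a.1, false)];
      (inr a, false) :: map (@lift_lit V) (negclause a.2) ++ [:: (inl a.1, true)]].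

Definition arbiter_clauses (V : finType) (A : {set arb V}) : cnf (xvar V) :=
  flatten (map (@arbiter_clauses_of V) (enum A)).

Definition forcing_clause (V : finType) (U E : {set V}) (D : V -> {set V})
  (A : {set arb V}) (psi : cnf (xvar V)) (C : clause (xvar V)) : Prop :=
  exists (e : V) (b : bool) (s : {ffun xvar V -> option bool}),
    [/\ e \in E,
        pdom s \subset (inl @: U) :|: (inr @: A),
        (forall t : {ffun xvar V -> bool},
            (forall x c, s x = Some c -> t x = c) ->
            sat t psi -> sat_lit t (inl e, b))
      & C =i (inl e, b) :: negclause (restrict s ((inl @: D e) :|: (inr @: A)))].

Definition xdep (V : finType) (D : V -> {set V}) (x : xvar V) : {set xvar V} :=
  match x with
  | inl v => inl @: D v
  | inr _ => set0
  end.

(* Main.v *)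
Require Import Defs.
From mathcomp Require Import all_boot.
Set Implicit Arguments. Unset Strict Implicit. Unset Printing Implicit Defensive.

Lemma sat_ext (T : Type) (t t' : T -> bool) phi : t =1 t' -> sat t phi = sat t' phi.
Proof.
move=> H; apply: eq_all => C; apply: eq_has => l; by rewrite /sat_lit H.
Qed.

Lemma sat_cat (T : Type) (t : T -> bool) p q : sat t (p ++ q) = sat t p && sat t q.
Proof. by rewrite /sat all_cat. Qed.

Lemma sat_lift (V : finType) (t : xvar V -> bool) phi :
  sat t (lift_cnf phi) = sat (fun x => t (inl x)) phi.
Proof.
rewrite /sat /lift_cnf all_map; apply: eq_all => C /=.
by rewrite /sat_clause has_map.
Qed.

Lemma sat_flatten (T : Type) (S : eqType) (t : T -> bool) (f : S -> cnf T) (s : seq S) :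
  (forall a, a \in s -> sat t (f a)) -> sat t (flatten (map f s)).
Proof.
elim: s => [|a s IH] H //=.
rewrite sat_cat H ?mem_head //= IH // => x Hx; apply: H; rewrite inE Hx orbT.
by [].

Qed.

Lemma in_negclause (T : finType) (s : {ffun T -> option bool}) x b :
  s x = Some b -> (x, ~~ b) \in negclause s.
Proof.
move=> H; rewrite /negclause mem_pmap; apply/mapP; exists x; first by rewrite mem_enum.
by rewrite H.
Qed.

Lemma negclause_unsat (T : finType) (s : {ffun T -> option bool}) (t : T -> bool) :
  ~~ has (sat_lit t) (negclause s) -> forall x b, s x = Some b -> t x = b.
Proof.
move=> /hasPn H x b Hx; have := H _ (in_negclause Hx).
by rewrite /sat_lit /=; case: (t x); clear Hx; case: b.
Qed.

Lemma sat_rcons (T : Type) (t : T -> bool) p c : sat t (rcons p c) = sat_clause t c && sat t p.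
Proof. by rewrite /sat all_rcons. Qed.

Lemma inl_in_E' (V : finType) (E : {set V}) (A : {set arb V}) x :
  (inl x \in (inl @: E) :|: (inr @: A)) = (x \in E).
Proof.
rewrite inE mem_imset; last exact: inl_inj.
case: (x \in E) => //=; apply/imsetP => -[y _] //.
Qed.

Lemma inr_in_E' (V : finType) (E : {set V}) (A : {set arb V}) a :
  (inr a \in (inl @: E) :|: (inr @: A)) = (a \in A).
Proof.
rewrite inE (mem_imset _ _ (@inr_inj _ _)).
case: (a \in A) => /=; rewrite ?orbT //; rewrite orbF; apply/imsetP => -[y _] //.
Qed.

Lemma inl_in_U' (V : finType) (U : {set V}) x :
  (inl x \in (inl @: U : {set xvar V})) = (x \in U).
Proof. by rewrite mem_imset; last exact: inl_inj. Qed.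

Lemma inr_in_U' (V : finType) (U : {set V}) a :
  (inr a \in (inl @: U : {set xvar V})) = false.
Proof. by apply/imsetP => -[y _]. Qed.

Theorem corollary3 (V : finType) (U E : {set V}) (D : V -> {set V})
  (phi : cnf V) (A : {set arb V}) (Cs : seq (clause (xvar V))) :
  (* well-formed DQBF prefix and matrix *)
  [disjoint U & E] ->
  (forall e, e \in E -> D e \subset U) ->
  (forall C l, C \in phi -> l \in C -> l.1 \in U :|: E) ->
  (* A is a set of arbiter variables *)
  valid_arbiters E D A ->
  (* each C_i is a forcing clause in phi /\ phi_A /\ C_1 /\ ... /\ C_{i-1} *)
  (forall i, i < size Cs ->
     forcing_clause U E D A
       (lift_cnf phi ++ arbiter_clauses A ++ take i Cs) (nth [::] Cs i)) ->
  dqbf_true (inl @: U) ((inl @: E) :|: (inr @: A)) (xdep D)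
            (lift_cnf phi ++ arbiter_clauses A ++ Cs)
  <-> dqbf_true U E D phi.
Proof.
move=> hUE hDU _ hA hCs; split.
  case=> F [Fdep Fsat].
  pose lift (s : {ffun V -> bool}) : {ffun xvar V -> bool} :=
    [ffun x => if x is inl v then s v else false].
  exists (fun e s => F (inl e) (lift s)); split.
    move=> e He s s' Hss; apply: Fdep; first by rewrite inl_in_E'.
    move=> x /imsetP [v Hv ->]; rewrite !ffunE; exact: Hss.
  move=> s; have := Fsat (lift s); rewrite !sat_cat sat_lift => /andP [H _].
  apply: etrans H; apply: sat_ext => v; by rewrite inl_in_E' inl_in_U' ffunE.
case=> F [Fdep Fsat].
pose pr (s : {ffun xvar V -> bool}) : {ffun V -> bool} := [ffun v => s (inl v)].
pose sig (a : arb V) : {ffun V -> bool} := [ffun v => odflt false (a.2 v)].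
pose F' (x : xvar V) (s : {ffun xvar V -> bool}) : bool :=
  match x with inl e => F e (pr s) | inr a => F a.1 (sig a) end.
exists F'; split.
  case=> [e|a] He s s' Hss //=.
  rewrite inl_in_E' in He; apply: Fdep => // v Hv; rewrite !ffunE; apply: Hss.
  by rewrite /= mem_imset //; exact: inl_inj.
pose asg (s : {ffun xvar V -> bool}) := (fun x : xvar V =>
     if x \in [set inl x | x in E] :|: [set inr x | x in A]
     then F' x s
     else if x \in [set inl x | x in U] then s x else false).
have asgl : forall s v, asg s (inl v) =
   if v \in E then F v (pr s) else if v \in U then s (inl v) else false.
  by move=> s v; rewrite /asg inl_in_E' inl_in_U'.
have asgU : forall s v, v \in U -> asg s (inl v) = s (inl v).
  by move=> s v Hv; rewrite asgl (disjointFr hUE Hv) Hv.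
have asgr : forall s a, a \in A -> asg s (inr a) = F a.1 (sig a).
  by move=> s a Ha; rewrite /asg inr_in_E' Ha.
have base : forall s, sat (asg s) (lift_cnf phi ++ arbiter_clauses A).
  move=> s; rewrite sat_cat sat_lift; apply/andP; split.
    have := Fsat (pr s); apply: etrans; apply: sat_ext => v.
    by rewrite asgl ffunE.
  apply: sat_flatten => a; rewrite mem_enum => Ha.
  have [Ha1 Hdom] := hA a Ha.
  rewrite /arbiter_clauses_of /sat /= /sat_clause /= !has_cat !has_map /=.
  have -> : has (preim (@lift_lit V) (sat_lit (asg s))) (negclause a.2) =
            has (sat_lit (fun v => asg s (inl v))) (negclause a.2) by [].
  case Hn: (has (sat_lit (fun v => asg s (inl v))) (negclause a.2)).
    by rewrite !orbT.
  have Hag := negclause_unsat (negbT Hn).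
  have Heq : asg s (inr a) = asg s (inl a.1).
    rewrite asgr // asgl Ha1; apply: Fdep => // v Hv.
    have : v \in pdom a.2 by rewrite Hdom.
    rewrite inE; case Hc: (a.2 v) => [c|] // _.
    rewrite !ffunE Hc /= -asgU; last by apply: (subsetP (hDU _ Ha1)).
    by rewrite (Hag _ _ Hc).
  by rewrite /sat_lit /= Heq; case: (asg s (inl a.1)).
have main : forall i, i <= size Cs -> forall s,
    sat (asg s) (lift_cnf phi ++ arbiter_clauses A ++ take i Cs).
  elim=> [|i IH] Hi s.
    by rewrite take0 cats0 base.
  rewrite (take_nth [::] Hi) !sat_cat sat_rcons.
  move: (IH (ltnW Hi) s); rewrite !sat_cat => /and3P [-> -> ->]; rewrite andbT /=.
  have [e [b [s0 [He Hdom Hforce HC]]]] := hCs i Hi.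
  rewrite /sat_clause (eq_has_r HC) /=.
  case Hn: (has _ _); first by rewrite orbT.
  rewrite orbF.
  have Hag := negclause_unsat (negbT Hn).
  pose s' : {ffun xvar V -> bool} := [ffun x => match x with
     inl v => if s0 (inl v) is Some c then c else s (inl v) | inr _ => s x end].
  have Hs' : forall v, v \in D e -> s' (inl v) = s (inl v).
    move=> v Hv; rewrite ffunE; case Hc: (s0 (inl v)) => [c|] //.
    rewrite -asgU; last exact: (subsetP (hDU _ He)).
    apply: esym; apply: Hag.
    rewrite /restrict ffunE in_setU mem_imset ?Hv //; exact: inl_inj.
  have := Hforce [ffun x => asg s' x].
  have P1 : forall x c, s0 x = Some c -> [ffun x => asg s' x] x = c.
    move=> x c Hc; rewrite ffunE.
    have : x \in pdom s0 by rewrite inE Hc.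
    move/(subsetP Hdom); rewrite in_setU => /orP [] /imsetP [y Hy Ex]; subst x.
      by rewrite asgU // ffunE Hc.
    rewrite (asgr _ _ Hy) -(asgr s _ Hy); apply: Hag.
    by rewrite /restrict ffunE in_setU (mem_imset _ _ (@inr_inj _ _)) Hy orbT.
  have P2 : sat [ffun x => asg s' x] (lift_cnf phi ++ arbiter_clauses A ++ take i Cs).
    have := IH (ltnW Hi) s'; apply: etrans; apply: sat_ext => x; by rewrite ffunE.
  move=> /(_ P1 P2); rewrite /sat_lit /= ffunE asgl He => /eqP <-.
  rewrite asgl He; apply/eqP; apply: Fdep; first by [].
  by move=> v Hv; rewrite !ffunE; apply: esym; move: (Hs' v Hv); rewrite ffunE.
move=> s; have := main _ (leqnn _) s; by rewrite take_size.
Qed.
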